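(* In the setting of problem (CP1) and the prox-ADC method described in the context, suppose Assumptions 1–6 hold, the generated sequence $\{x^k\}$ is bounded, and $\partial^\infty_Af_p(x)=\{0\}$ for every $x\in\bigcap_{p=1}^m\operatorname{dom}F_p$ and every $p\in I_2$. Then for any $\bar\eta>0$, $\bar\beta>0$, $\bar k\in\mathbb{N}$ there is an integer $k_0\ge\bar k$ with $\max_{1\le p\le m}\sum_{k'\ge k_0}\widehat\alpha_p^{k'}+\epsilon_{k_0}\le\bar\beta$, $\delta_{k_0}/(\lambda+\ell_{k_0})\le\bar\beta$ and $\delta_{k_0}\le\bar\eta$; consequently $x^{k_0,i_{k_0}+1}$ is a $(\bar\eta\max\{1,\sqrt{2m}D\},\bar\beta,\bar k)$-weakly A-stationary point of (CP1), where $D=\sup_{k\in\mathbb{N}}\sup_{y\in Y^k(x^{k+1})}\|y\|$.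
   Context: Problem (CP1): integers $0\le m_1\le m$; $f_p:\mathbb{R}^n\to\mathbb{R}$; $\varphi_p:\mathbb{R}\to\mathbb{R}$ convex for $p\le m_1$; $\varphi_p=\delta_{(-\infty,0]}$ for $p>m_1$; $F_p=\varphi_p\circ f_p$. $I_1=\{p:\varphi_p$ nondecreasing$\}$, $I_2$ its complement. Monotonic decomposition $\varphi_p=\varphi_p^\uparrow+\varphi^\downarrow_p$: $(\varphi_p,0)$ if nondecreasing; $(0,\varphi_p)$ if nonincreasing; otherwise with minimizer $z^*$, $\varphi^\uparrow_p=\varphi_p(z^* )$ on $z\le z^*$, $\varphi_p$ on $z>z^*$; $\varphi_p^\downarrow=\varphi_p-\varphi_p(z^* )$ on $z\le z^*$, $0$ on $z>z^*$. Assumption 1: $f^k_p=g^k_p-h^k_p$ ($g^k_p,h^k_p:\mathbb{R}^n\to\mathbb{R}$ convex), $f_p^k$ epi-converges to $f_p$; $-\infty<\liminf_{x'\to x,k\to\infty}f_p^k(x')\le\limsup_{x'\to x,k\to\infty}f_p^k(x')<\infty$ $\forall x$; $\varphi_p\circ f_p^k$ epi-converges to $\varphi_p\circ f_p$. Assumption 2: $X^k=\{x:f^k_p(x)\le0,p>m_1\}$, $\alpha_p^k=\sup_{X^k}[f^{k+1}_p-f^k_p]_+$; there are $x^0$ and nonnegative $\widehat\alpha_p^k\ge\alpha_p^k$ ($p>m_1$), $\sum_{k'}\widehat\alpha_p^{k'}<\infty$, $f^0_p(x^0)\le-\sum_{k'}\widehat\alpha_p^{k'}$; $\widehat\alpha_p^k=0$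 for $p\le m_1$. Assumption 3: $\exists\ell_k>0$ with $\min\{\mathbb H(\partial g_p^k(x),\partial g_p^k(x')),\mathbb H(\partial h_p^k(x),\partial h_p^k(x'))\}\le\ell_k\|x-x'\|$ $\forall x,x',p$. Assumption 4: each $\sum_{p\le m_1}\varphi_p(f^k_p)+\sum_{p>m_1}\delta_{(-\infty,0]}(f_p^k)$ is level-bounded. Assumption 5: for every $\bar x\in\bigcap_p\operatorname{dom}F_p$, if $0=\sum_py_pv_p$ with $(y_p,v_p)\in(\bigcup\{\mathcal N_{\operatorname{dom}\varphi_p}(t):t\in T_p(\bar x)\}\times\operatorname{con}\partial_Af_p(\bar x))\cup(\mathbb{R}\times[\partial_A^\infty f_p(\bar x)\setminus\{0\}])$ for each $p$, then all $y_p=0$; $T_p(x)=\{t:\exists$ infinite $N$, $x^k\to x$, $f_p^k(x^k)\to_Nt\}$; $\partial_Af_p(\bar x)=\bigcup_{x^k\to\bar x}\operatorname{Lim\,sup}_k[\partial g^k_p(x^k)-\partial h^k_p(x^k)]$, $\partial^\infty_Af_p(\bar x)=\bigcup_{x^k\to\bar x}\operatorname{Lim\,sup}_k^\infty[\partial g^k_p(x^k)-\partial h^k_p(x^k)]$ (outer limit $\{u:\exists$ infinite $N$, $u^k\in C^k$, $u^k\to_Nu\}$, horizon outer limit $\{0\}\cup\{u:\exists$ infinite $N,\lambda_k\downarrow0,u^k\in C^k,\lambda_ku^k\to_Nu\}$). Method: $\lambda>0$; positive $\epsilon_k\downarrow0,\delta_k\downarrow0$ with $\delta_k/(\lambda+\ell_k)\downarrow0$;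 $\sigma^k_p=\sum_{k'\ge k}\widehat\alpha^{k'}_p$; at $y$ pick $a_p\in\partial h^k_p(y)$, $b_p\in\partial g^k_p(y)$; $f^{k,\mathrm{up}}_p(x;y)=g^k_p(x)-h^k_p(y)-a_p^\top(x-y)+\sigma^k_p$, $f^{k,\mathrm{lo}}_p(x;y)=g^k_p(y)+b_p^\top(x-y)-h^k_p(x)$, $\widehat F^k_p(x;y)=\varphi^\uparrow_p(f^{k,\mathrm{up}}_p(x;y))+\varphi^\downarrow_p(f^{k,\mathrm{lo}}_p(x;y))$. Subproblem at $y$: $\operatorname{argmin}\{\sum_{p\le m_1}\widehat F_p^k(x;y)+\frac\lambda2\|x-y\|^2:f^{k,\mathrm{up}}_p(x;y)\le0,p>m_1\}$. $x^{k,0}=x^k$, $x^{k,i+1}$ = subproblem solution at $x^{k,i}$; $i_k$ = first $i$ with $f_p^{k,\mathrm{up}}(x^{k,i+1};x^{k,i})\le f_p^k(x^{k,i+1})+\sigma^k_p+\epsilon_k$ $\forall p$, $f_p^{k,\mathrm{lo}}(x^{k,i+1};x^{k,i})\ge f^k_p(x^{k,i+1})-\epsilon_k$ for $p\in I_2$, $\|x^{k,i+1}-x^{k,i}\|\le\delta_k/(\lambda+\ell_k)$; $x^{k+1}=x^{k,i_k}$. Assumption 6: for all $k$ and every $(x',x'')$ with $x''$ the subproblem solution at $y=x'$, if $y_p\in\mathcal N_{(-\infty,0]}(f^{k,\mathrm{up}}_p(x'';x'))$ ($p>m_1$) and $0\in\sum_{p>m_1}y_p\partial f^{k,\mathrm{up}}_p(x'';x')$,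 then all $y_p=0$. $Y^k(x^{k+1})$: the set of $(y_{1,1},y_{1,2},\dots,y_{m,1},y_{m,2})$ with $0\in\sum_p[y_{p,1}\partial f^{k,\mathrm{up}}_p(x^{k,i_k+1};x^{k,i_k})+y_{p,2}\partial f^{k,\mathrm{lo}}_p(x^{k,i_k+1};x^{k,i_k})]+\lambda(x^{k,i_k+1}-x^{k,i_k})$, $y_{p,1}\in\partial\varphi^\uparrow_p(f^{k,\mathrm{up}}_p(x^{k,i_k+1};x^{k,i_k}))$, $y_{p,2}\in\partial\varphi^\downarrow_p(f^{k,\mathrm{lo}}_p(x^{k,i_k+1};x^{k,i_k}))$. For convex $\psi$, $\partial^\beta\psi(x)=\bigcup\{\partial\psi(z):\|z-x\|\le\beta\}$. $x$ is $(\bar\eta,\bar\beta,\bar k)$-weakly A-stationary if $\exists k\ge\bar k$ with $\operatorname{dist}\big(0,\sum_p\bigcup\{y_{p,1}[\partial^{\bar\beta}g^k_p(x)-\partial^{\bar\beta}h^k_p(x)]+y_{p,2}[\partial^{\bar\beta}g^k_p(x)-\partial^{\bar\beta}h^k_p(x)]:y_{p,1}\in\partial^{\bar\beta}\varphi_p^\uparrow(f^k_p(x)),y_{p,2}\in\partial^{\bar\beta}\varphi_p^\downarrow(f^k_p(x))\}\big)\le\bar\eta$. *)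

(* Defs.v *)
(* R : realType, vectors of R^n are
   row vectors 'rV[R]_n, the index set {1,..,m} is 'I_m (0-based, so the
   paper's "p <= m1" is "(p < m1)%N" and "p > m1" is "(m1 <= p)%N"). *)
From HB Require Import structures.
From mathcomp Require Import all_boot all_order all_algebra.
From mathcomp Require Import all_classical all_reals all_analysis.
Set Implicit Arguments. Unset Strict Implicit. Unset Printing Implicit Defensive.
Import Order.TTheory GRing.Theory Num.Theory numFieldNormedType.Exports.
Local Open Scope classical_set_scope.
Local Open Scope ring_scope.

Section Generic.
Context {R : realType} {n : nat}.
Local Notation vec := 'rV[R]_n.

Definition dotv (u v : vec) : R := \sum_(i < n) u 0 i * v 0 i.
Definition enorm (u : vec) : R := Num.sqrt (\sum_(i < n) u 0 i ^+ 2).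

Definition vcvg (xs : nat -> vec) (x : vec) : Prop :=
  forall e : R, 0 < e -> exists K : nat, forall k, (K <= k)%N -> enorm (xs k - x) < e.
Definition vcvg_along (N : set nat) (xs : nat -> vec) (x : vec) : Prop :=
  forall e : R, 0 < e -> exists K : nat, forall k, N k -> (K <= k)%N -> enorm (xs k - x) < e.
Definition rcvg (u : nat -> R) (t : R) : Prop :=
  forall e : R, 0 < e -> exists K : nat, forall k, (K <= k)%N -> `|u k - t| < e.
Definition rcvg_along (N : set nat) (u : nat -> R) (t : R) : Prop :=
  forall e : R, 0 < e -> exists K : nat, forall k, N k -> (K <= k)%N -> `|u k - t| < e.

Definition convex_fn (g : vec -> R) : Prop :=
  forall (x y : vec) (t : R), 0 <= t <= 1 ->
    g (t *: x + (1 - t) *: y) <= t * g x + (1 - t) * g y.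
Definition convex_rfn (psi : R -> R) : Prop :=
  forall (x y t : R), 0 <= t <= 1 ->
    psi (t * x + (1 - t) * y) <= t * psi x + (1 - t) * psi y.

Definition subdiff (g : vec -> R) (x : vec) : set vec :=
  [set v | forall z, g x + dotv v (z - x) <= g z].
Definition esubdiff (psi : R -> \bar R) (t : R) : set R :=
  [set y | psi t \is a fin_num /\ forall s, (psi t + (y * (s - t))%:E <= psi s)%E].
Definition subdiff_enl (b : R) (g : vec -> R) (x : vec) : set vec :=
  [set v | exists z, enorm (z - x) <= b /\ subdiff g z v].
Definition esubdiff_enl (b : R) (psi : R -> \bar R) (t : R) : set R :=
  [set y | exists s, `|s - t| <= b /\ esubdiff psi s y].

Definition setMinus (A B : set vec) : set vec := [set a - b | a in A & b in B].

Definition edist (x : vec) (A : set vec) : \bar R :=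
  ereal_inf [set (enorm (x - a))%:E | a in A].
Definition hausdorff (A B : set vec) : \bar R :=
  maxe (ereal_sup [set edist a B | a in A]) (ereal_sup [set edist b A | b in B]).

Definition ncone (C : set R) (t : R) : set R :=
  [set y | C t /\ forall s, C s -> y * (s - t) <= 0].

Definition conv_hull (A : set vec) : set vec :=
  [set v | exists (r : nat) (w : 'I_r -> R) (a : 'I_r -> vec),
     (forall i, 0 <= w i) /\ \sum_(i < r) w i = 1 /\ (forall i, A (a i)) /\
     v = \sum_(i < r) w i *: a i].

Definition outer_lim (C : nat -> set vec) : set vec :=
  [set u | exists N : set nat, infinite_set N /\
     exists us : nat -> vec, (forall k, N k -> C k (us k)) /\ vcvg_along N us u].
Definition horizon_outer_lim (C : nat -> set vec) : set vec :=
  [set u | u = 0 \/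
     exists N : set nat, infinite_set N /\
     exists (lam : nat -> R) (us : nat -> vec),
       (forall k, 0 < lam k) /\ (forall k, lam k.+1 <= lam k) /\ rcvg lam 0 /\
       (forall k, N k -> C k (us k)) /\ vcvg_along N (fun k => lam k *: us k) u].

(* epi-convergence (Rockafellar-Wets, Prop. 7.2) *)
Definition epi_conv (Fk : nat -> vec -> \bar R) (F : vec -> \bar R) : Prop :=
  forall x,
    (forall xs, vcvg xs x -> (F x <= limn_einf (fun k => Fk k (xs k)))%E) /\
    (exists xs, vcvg xs x /\ (limn_esup (fun k => Fk k (xs k)) <= F x)%E).

Definition joint_liminf (Fk : nat -> vec -> R) (x : vec) : \bar R :=
  ereal_sup [set l | exists (e : R) (K : nat), 0 < e /\
    l = ereal_inf [set r | exists k x', (K <= k)%N /\ enorm (x' - x) < e /\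
                                        r = (Fk k x')%:E]].
Definition joint_limsup (Fk : nat -> vec -> R) (x : vec) : \bar R :=
  ereal_inf [set l | exists (e : R) (K : nat), 0 < e /\
    l = ereal_sup [set r | exists k x', (K <= k)%N /\ enorm (x' - x) < e /\
                                        r = (Fk k x')%:E]].

Definition nondecr (psi : R -> \bar R) : Prop := forall s t, s <= t -> (psi s <= psi t)%E.
Definition nonincr (psi : R -> \bar R) : Prop := forall s t, s <= t -> (psi t <= psi s)%E.

Definition mono_decomp (psi up down : R -> \bar R) : Prop :=
  (nondecr psi -> up = psi /\ down = (fun _ => 0%E)) /\
  (~ nondecr psi -> nonincr psi -> up = (fun _ => 0%E) /\ down = psi) /\
  (~ nondecr psi -> ~ nonincr psi ->
     exists zs : R, (forall z, (psi zs <= psi z)%E) /\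
       forall z, (z <= zs -> up z = psi zs /\ down z = (psi z - psi zs)%E) /\
                 (zs < z -> up z = psi z /\ down z = 0%E)).

Definition ind_nonpos (t : R) : \bar R := if t <= 0 then 0%E else +oo%E.

End Generic.

Record cp1 (R : realType) (n m : nat) := CP1 {
  m1 : nat;
  phi : 'I_m -> R -> \bar R;
  phiU : 'I_m -> R -> \bar R;
  phiD : 'I_m -> R -> \bar R;
  fp : 'I_m -> 'rV[R]_n -> R;
  gk : nat -> 'I_m -> 'rV[R]_n -> R;
  hk : nat -> 'I_m -> 'rV[R]_n -> R
}.

Record padc (R : realType) (n m : nat) := PADC {
  lam : R;
  eps : nat -> R;
  del : nat -> R;
  ell : nat -> R;
  ahat : nat -> 'I_m -> R;
  x0 : 'rV[R]_n;
  asel : nat -> 'I_m -> 'rV[R]_n -> 'rV[R]_n; (* a_p chosen at y, in dh_p^k(y) *)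
  bsel : nat -> 'I_m -> 'rV[R]_n -> 'rV[R]_n; (* b_p chosen at y, in dg_p^k(y) *)
  xs : nat -> 'rV[R]_n;
  xx : nat -> nat -> 'rV[R]_n;
  ik : nat -> nat
}.

Section Problem.
Context {R : realType} {n m : nat} (P : cp1 R n m) (M : padc R n m).
Local Notation vec := 'rV[R]_n.

Definition fk (k : nat) (p : 'I_m) (x : vec) : R := gk P k p x - hk P k p x.
Definition Fp (p : 'I_m) (x : vec) : \bar R := phi P p (fp P p x).
Definition domF_all (x : vec) : Prop := forall p, (Fp p x < +oo)%E.
Definition I2 (p : 'I_m) : Prop := ~ nondecr (phi P p).
Definition domphi (p : 'I_m) : set R := [set t | (phi P p t < +oo)%E].

Definition Tset (p : 'I_m) (x : vec) : set R :=
  [set t | exists N : set nat, infinite_set N /\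
     exists xs' : nat -> vec, vcvg xs' x /\ rcvg_along N (fun k => fk k p (xs' k)) t].
Definition dA (p : 'I_m) (x : vec) : set vec :=
  [set u | exists xs' : nat -> vec, vcvg xs' x /\
     outer_lim (fun k => setMinus (subdiff (gk P k p) (xs' k)) (subdiff (hk P k p) (xs' k))) u].
Definition dAinf (p : 'I_m) (x : vec) : set vec :=
  [set u | exists xs' : nat -> vec, vcvg xs' x /\
     horizon_outer_lim
       (fun k => setMinus (subdiff (gk P k p) (xs' k)) (subdiff (hk P k p) (xs' k))) u].

Definition cp1_wf : Prop :=
  (m1 P <= m)%N /\
  (forall p : 'I_m, (p < m1 P)%N ->
     exists psi : R -> R, convex_rfn psi /\ phi P p = (fun z => (psi z)%:E)) /\
  (forall p : 'I_m, (m1 P <= p)%N -> phi P p = ind_nonpos) /\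
  (forall p, mono_decomp (phi P p) (phiU P p) (phiD P p)) /\
  (forall k p, convex_fn (gk P k p) /\ convex_fn (hk P k p)).

Definition Assumption1 : Prop :=
  (forall p, epi_conv (fun k x => (fk k p x)%:E) (fun x => (fp P p x)%:E)) /\
  (forall p x, (-oo < joint_liminf (fun k => fk k p) x)%E /\
               (joint_liminf (fun k => fk k p) x <= joint_limsup (fun k => fk k p) x)%E /\
               (joint_limsup (fun k => fk k p) x < +oo)%E) /\
  (forall p, epi_conv (fun k x => phi P p (fk k p x)) (fun x => phi P p (fp P p x))).

Definition sigma (k : nat) (p : 'I_m) : R :=
  limn (fun N => \sum_(k <= j < N) ahat M j p).

Definition Xk (k : nat) : set vec := [set x | forall p : 'I_m, (m1 P <= p)%N -> fk k p x <= 0].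
Definition alphak (k : nat) (p : 'I_m) : \bar R :=
  ereal_sup [set (Num.max (fk k.+1 p x - fk k p x) 0)%:E | x in Xk k].

Definition Assumption2 : Prop :=
  (forall k p, 0 <= ahat M k p) /\
  (forall k (p : 'I_m), (m1 P <= p)%N -> (alphak k p <= (ahat M k p)%:E)%E) /\
  (forall p, cvgn (series (fun k => ahat M k p))) /\
  (forall p : 'I_m, (m1 P <= p)%N -> fk 0 p (x0 M) <= - sigma 0 p) /\
  (forall k (p : 'I_m), (p < m1 P)%N -> ahat M k p = 0).

Definition Assumption3 : Prop :=
  (forall k, 0 < ell M k) /\
  (forall k p (x x' : vec),
     (mine (hausdorff (subdiff (gk P k p) x) (subdiff (gk P k p) x'))
           (hausdorff (subdiff (hk P k p) x) (subdiff (hk P k p) x'))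
       <= (ell M k * enorm (x - x'))%:E)%E).

Definition Assumption4 : Prop :=
  forall k (c : R), exists B : R, forall x : vec,
    ((\sum_(p < m | (p < m1 P)%N) phi P p (fk k p x)) +
     (\sum_(p < m | (m1 P <= p)%N) ind_nonpos (fk k p x)) <= c%:E)%E ->
    enorm x <= B.

Definition Assumption5 : Prop :=
  forall xbar : vec, domF_all xbar ->
  forall (y : 'I_m -> R) (v : 'I_m -> vec),
    (forall p,
       ((exists t, Tset p xbar t /\ ncone (domphi p) t (y p)) /\ conv_hull (dA p xbar) (v p))
       \/ (dAinf p xbar (v p) /\ v p <> 0)) ->
    \sum_(p < m) y p *: v p = 0 ->
    forall p, y p = 0.

Definition fup (k : nat) (p : 'I_m) (x y : vec) : R :=
  gk P k p x - hk P k p y - dotv (asel M k p y) (x - y) + sigma k p.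
Definition flo (k : nat) (p : 'I_m) (x y : vec) : R :=
  gk P k p y + dotv (bsel M k p y) (x - y) - hk P k p x.
Definition Fhat (k : nat) (p : 'I_m) (x y : vec) : \bar R :=
  (phiU P p (fup k p x y) + phiD P p (flo k p x y))%E.
Definition subobj (k : nat) (x y : vec) : \bar R :=
  ((\sum_(p < m | (p < m1 P)%N) Fhat k p x y) + ((lam M / 2) * enorm (x - y) ^+ 2)%:E)%E.
Definition sub_feas (k : nat) (x y : vec) : Prop :=
  forall p : 'I_m, (m1 P <= p)%N -> fup k p x y <= 0.
Definition subsol (k : nat) (y x : vec) : Prop :=
  sub_feas k x y /\ forall z, sub_feas k z y -> (subobj k x y <= subobj k z y)%E.

Definition dup (k : nat) (p : 'I_m) (x y : vec) : set vec :=
  [set v - asel M k p y | v in subdiff (gk P k p) x].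
Definition dlo (k : nat) (p : 'I_m) (x y : vec) : set vec :=
  [set bsel M k p y - w | w in subdiff (hk P k p) x].

Definition Assumption6 : Prop :=
  forall k (x' x'' : vec), subsol k x' x'' ->
  forall y : 'I_m -> R,
    (forall p : 'I_m, (m1 P <= p)%N -> ncone [set t | t <= 0] (fup k p x'' x') (y p)) ->
    (exists v : 'I_m -> vec, (forall p : 'I_m, (m1 P <= p)%N -> dup k p x'' x' (v p)) /\
        \sum_(p < m | (m1 P <= p)%N) y p *: v p = 0) ->
    forall p : 'I_m, (m1 P <= p)%N -> y p = 0.

Definition method_wf : Prop :=
  0 < lam M /\
  (forall k, 0 < eps M k) /\ (forall k, eps M k.+1 <= eps M k) /\ rcvg (eps M) 0 /\
  (forall k, 0 < del M k) /\ (forall k, del M k.+1 <= del M k) /\ rcvg (del M) 0 /\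
  (forall k, del M k.+1 / (lam M + ell M k.+1) <= del M k / (lam M + ell M k)) /\
  rcvg (fun k => del M k / (lam M + ell M k)) 0 /\
  (forall k p y, subdiff (hk P k p) y (asel M k p y)) /\
  (forall k p y, subdiff (gk P k p) y (bsel M k p y)).

Definition stop_test (k i : nat) : Prop :=
  let xn := xx M k i.+1 in let xc := xx M k i in
  (forall p, fup k p xn xc <= fk k p xn + sigma k p + eps M k) /\
  (forall p, I2 p -> fk k p xn - eps M k <= flo k p xn xc) /\
  enorm (xn - xc) <= del M k / (lam M + ell M k).

Definition generated : Prop :=
  xs M 0 = x0 M /\
  (forall k, xx M k 0 = xs M k) /\
  (forall k i, subsol k (xx M k i) (xx M k i.+1)) /\
  (forall k, stop_test k (ik M k) /\ forall i, (i < ik M k)%N -> ~ stop_test k i) /\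
  (forall k, xs M k.+1 = xx M k (ik M k)).

Definition Yset (k : nat) : set (('I_m -> R) * ('I_m -> R)) :=
  [set y | let xn := xx M k (ik M k).+1 in let xc := xx M k (ik M k) in
     (exists v1 v2 : 'I_m -> vec,
        (forall p, dup k p xn xc (v1 p)) /\ (forall p, dlo k p xn xc (v2 p)) /\
        \sum_(p < m) (y.1 p *: v1 p + y.2 p *: v2 p) + lam M *: (xn - xc) = 0) /\
     (forall p, esubdiff (phiU P p) (fup k p xn xc) (y.1 p) /\
                esubdiff (phiD P p) (flo k p xn xc) (y.2 p))].
Definition ynorm (y : ('I_m -> R) * ('I_m -> R)) : R :=
  Num.sqrt (\sum_(p < m) (y.1 p ^+ 2 + y.2 p ^+ 2)).
Definition Dconst : \bar R :=
  ereal_sup [set (ynorm y)%:E | y in [set y | exists k, Yset k y]].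

Definition wA_set (beta : R) (k : nat) (p : 'I_m) (x : vec) : set vec :=
  let A := setMinus (subdiff_enl beta (gk P k p) x) (subdiff_enl beta (hk P k p) x) in
  [set v | exists (y1 y2 : R) (a1 a2 : vec),
     esubdiff_enl beta (phiU P p) (fk k p x) y1 /\
     esubdiff_enl beta (phiD P p) (fk k p x) y2 /\
     A a1 /\ A a2 /\ v = y1 *: a1 + y2 *: a2].
Definition msum (S : 'I_m -> set vec) : set vec :=
  [set v | exists w : 'I_m -> vec, (forall p, S p (w p)) /\ v = \sum_(p < m) w p].
Definition weakly_A_stationary (eta : \bar R) (beta : R) (kbar : nat) (x : vec) : Prop :=
  exists k, (kbar <= k)%N /\
    (edist 0 (msum (fun p => wA_set beta k p x)) <= eta)%E.

End Problem.

(* Main.v *)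
Require Import Defs.
From HB Require Import structures.
From mathcomp Require Import all_boot all_order all_algebra.
From mathcomp Require Import all_classical all_reals all_analysis.
Import Order.TTheory GRing.Theory Num.Theory numFieldNormedType.Exports.
Local Open Scope classical_set_scope.
Local Open Scope ring_scope.
From mathcomp Require Import ring lra zify.

Section Core.
Context {R : realType} {V : lmodType R} {T : finType}.
Definition tdot (c P : T -> R) : R := \sum_z c z * P z.
Definition ccomb (t : R) (P1 P2 : T -> R) : T -> R := fun z => t * P1 z + (1 - t) * P2 z.
Definition supp (s : seq T) (P : T -> R) := forall z, z \notin s -> P z = 0.
Definition shiftP (i : T) (P : T -> R) (a : R) : T -> R := fun z => P z + a * (z == i)%:R.

Lemma tdot_ccomb c t P1 P2 : tdot c (ccomb t P1 P2) = t * tdot c P1 + (1 - t) * tdot c P2.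
Proof.
rewrite /tdot /ccomb !mulr_sumr -big_split /=; apply: eq_bigr => z _; ring.
Qed.

Lemma core_ind (J : V -> (T -> R) -> R) (xb : V) :
  (forall x1 x2 P1 P2 t, 0 <= t <= 1 ->
     J (t *: x1 + (1-t) *: x2) (ccomb t P1 P2) <= t * J x1 P1 + (1-t) * J x2 P2) ->
  (forall x, J xb (fun _ => 0) <= J x (fun _ => 0)) ->
  forall s : seq T, exists c, supp s c /\
    forall x P, supp s P -> J xb (fun _ => 0) + tdot c P <= J x P.
Proof.
move=> Jconv Jmin; set J0 := J xb (fun _ => 0).
elim=> [|i s [c [cs IH]]].
  exists (fun _ => 0); split => // x P sP.
  have -> : P = (fun _ => 0) by apply/funext => z; exact: sP.
  by rewrite /tdot big1 ?addr0 // => z _; rewrite mulr0.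
have [iS|iNS] := boolP (i \in s).
  exists c; split.
    by move=> z; rewrite in_cons negb_or => /andP[_ ]; exact: cs.
  move=> x P sP; apply: IH => z zs; apply: sP.
  by rewrite in_cons negb_or zs andbT; apply/eqP => ezi; move: zs; rewrite ezi iS.
pose Q x P := J x P - J0 - tdot c P.
have Q0 : forall x P, supp s P -> 0 <= Q x P.
  by move=> x P sP; rewrite /Q subr_ge0 lerBrDr addrC IH.
have Qconv : forall x1 x2 P1 P2 t, 0 <= t <= 1 ->
    Q (t *: x1 + (1-t) *: x2) (ccomb t P1 P2) <= t * Q x1 P1 + (1-t) * Q x2 P2.
  move=> x1 x2 P1 P2 t t01; rewrite /Q tdot_ccomb.
  have := Jconv x1 x2 P1 P2 t t01; lra.
pose A := [set a | exists x P u, supp s P /\ 0 < u /\ a = - Q x (shiftP i P (- u)) / u].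
pose B := [set b | exists x P u, supp s P /\ 0 < u /\ b = Q x (shiftP i P u) / u].
have AB : forall a b, A a -> B b -> a <= b.
  move=> a b [x1 [P1 [u1 [s1 [u1p ->]]]]] [x2 [P2 [u2 [s2 [u2p ->]]]]].
  set th := u2 / (u1 + u2).
  have u12 : 0 < u1 + u2 by rewrite addr_gt0.
  have th01 : 0 <= th <= 1.
    apply/andP; split; first by rewrite /th divr_ge0 // ltW.
    by rewrite /th ler_pdivrMr // mul1r lerDr ltW.
  have := Qconv x1 x2 (shiftP i P1 (- u1)) (shiftP i P2 u2) th th01.
  have sC : supp s (ccomb th (shiftP i P1 (- u1)) (shiftP i P2 u2)).
    move=> z zs; rewrite /ccomb /shiftP s1 // s2 // !add0r /th.
    by field; rewrite gt_eqF.
  have H1 := Q0 _ _ sC; move=> H2.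
  set Q1 := Q x1 _ in H2 *; set Q2 := Q x2 _ in H2 *.
  have H3 : 0 <= u2 * Q1 + u1 * Q2.
    have -> : u2 * Q1 + u1 * Q2 = (u1 + u2) * (th * Q1 + (1 - th) * Q2).
      by rewrite /th; field; rewrite gt_eqF.
    apply: mulr_ge0; [exact: ltW | exact: le_trans (H1 _) H2].
  rewrite -subr_ge0.
  have -> : Q2 / u2 - - Q1 / u1 = (u2 * Q1 + u1 * Q2) / (u1 * u2).
    by field; rewrite ?gt_eqF.
  by rewrite divr_ge0 // mulr_ge0 ?ltW.
have A1 : A (- Q xb (shiftP i (fun _ => 0) (- 1)) / 1).
  by exists xb, (fun _ => 0), 1; split => //; split => //.
have B1 : B (Q xb (shiftP i (fun _ => 0) 1) / 1).
  by exists xb, (fun _ => 0), 1; split => //; split => //.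
have hsA : has_sup A.
  split; first by eexists; exact: A1.
  by eexists => a Aa; exact: AB Aa B1.
set ci := sup A.
have ciA : forall a, A a -> a <= ci by move=> a Aa; exact: sup_upper_bound.
have ciB : forall b, B b -> ci <= b.
  move=> b Bb; apply: ge_sup; first by eexists; exact: A1.
  by move=> a Aa; exact: AB Aa Bb.
exists (fun z => c z + ci * (z == i)%:R); split.
  move=> z; rewrite in_cons negb_or => /andP[zi zs].
  by rewrite cs // (negPf zi) mulr0 addr0.
move=> x P sP.
pose P0 := fun z => if z == i then 0 else P z.
have sP0 : supp s P0.
  move=> z zs; rewrite /P0; case: eqP => // /eqP zi; apply: sP.
  by rewrite in_cons negb_or zi.
have PE : P = shiftP i P0 (P i).
  apply/funext => z; rewrite /shiftP /P0; case: eqP => [->|_]; first by rewrite mulr1 add0r.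
  by rewrite mulr0 addr0.
have ci0 : c i = 0 by apply: cs.
have tdE : tdot (fun z => c z + ci * (z == i)%:R) P = tdot c P0 + ci * P i.
  rewrite /tdot (eq_bigr (fun z => c z * P0 z + ci * ((z == i)%:R * P z))); last first.
    move=> z _; rewrite /P0; case: (eqVneq z i) => [->|zi].
      by rewrite ?eqxx ci0 /=; ring.
    by rewrite ?(negPf zi) /=; ring.
  rewrite big_split /= -mulr_sumr; congr (_ + _ * _).
  rewrite (bigD1 i) //= eqxx mul1r big1 ?addr0 //.
  by move=> z /negPf ->; rewrite mul0r.
have QP : Q x P = J x P - J0 - tdot c P0.
  rewrite /Q; congr (_ - _ - _); rewrite /tdot; apply: eq_bigr => z _.
  by rewrite /P0; case: eqP => [->|_] //; rewrite ci0 !mul0r.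
rewrite tdE.
have key : ci * P i <= Q x P.
  have [Pn|Pp|Pz] := ltgtP (P i) 0.
  - have u0 : 0 < - P i by rewrite oppr_gt0.
    have Aa : A (- Q x (shiftP i P0 (- - P i)) / (- P i)).
      by exists x, P0, (- P i).
    move: (ciA _ Aa); rewrite opprK -PE => H.
    have := H; rewrite ler_pdivrMr // => H'.
    rewrite mulrN in H'; lra.
  - have Bb : B (Q x (shiftP i P0 (P i)) / (P i)) by exists x, P0, (P i).
    move: (ciB _ Bb); rewrite -PE ler_pdivlMr //.
  - rewrite Pz mulr0; apply: Q0.
    suff -> : P = P0 by [].
    by rewrite PE Pz; apply/funext => z; rewrite /shiftP mul0r addr0.
move: key; rewrite QP; lra.
Qed.

Lemma core (J : V -> (T -> R) -> R) (xb : V) :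
  (forall x1 x2 P1 P2 t, 0 <= t <= 1 ->
     J (t *: x1 + (1-t) *: x2) (ccomb t P1 P2) <= t * J x1 P1 + (1-t) * J x2 P2) ->
  (forall x, J xb (fun _ => 0) <= J x (fun _ => 0)) ->
  exists c, forall x P, J xb (fun _ => 0) + tdot c P <= J x P.
Proof.
move=> Jc Jm; have [c [_ H]] := core_ind J xb Jc Jm (enum T).
by exists c => x P; apply: H => z; rewrite mem_enum.
Qed.
End Core.
Section Vec.
Context {R : realType} {n : nat}.
Local Notation vec := 'rV[R]_n.
Implicit Types u v w : vec.

Lemma dotvC u v : dotv u v = dotv v u.
Proof. by rewrite /dotv; apply: eq_bigr => i _; rewrite mulrC. Qed.
Lemma dotvDr u v w : dotv u (v + w) = dotv u v + dotv u w.
Proof. by rewrite /dotv -big_split; apply: eq_bigr => i _; rewrite !mxE mulrDr. Qed.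
Lemma dotvZr u v (t : R) : dotv u (t *: v) = t * dotv u v.
Proof. by rewrite /dotv mulr_sumr; apply: eq_bigr => i _; rewrite !mxE mulrCA. Qed.
Lemma dotvNr u v : dotv u (- v) = - dotv u v.
Proof. by rewrite /dotv -sumrN; apply: eq_bigr => i _; rewrite !mxE mulrN. Qed.
Lemma dotvBr u v w : dotv u (v - w) = dotv u v - dotv u w.
Proof. by rewrite dotvDr dotvNr. Qed.
Lemma dotv0r u : dotv u 0 = 0.
Proof. by rewrite /dotv big1 // => i _; rewrite mxE mulr0. Qed.
Lemma dotvDl u v w : dotv (v + w) u = dotv v u + dotv w u.
Proof. by rewrite dotvC dotvDr !(dotvC u). Qed.
Lemma dotvZl u v (t : R) : dotv (t *: v) u = t * dotv v u.
Proof. by rewrite dotvC dotvZr dotvC. Qed.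
Lemma dotvNl u v : dotv (- v) u = - dotv v u.
Proof. by rewrite dotvC dotvNr dotvC. Qed.
Lemma dotvBl u v w : dotv (v - w) u = dotv v u - dotv w u.
Proof. by rewrite dotvDl dotvNl. Qed.
Lemma dotv0l u : dotv 0 u = 0.
Proof. by rewrite dotvC dotv0r. Qed.
Lemma dotv_suml (I : finType) (F : I -> vec) u :
  dotv (\sum_i F i) u = \sum_i dotv (F i) u.
Proof.
elim/big_rec2: _ => [|i x y _ Hy]; first by rewrite dotv0l.
by rewrite dotvDl Hy.
Qed.
Lemma dotv_ge0 u : 0 <= dotv u u.
Proof. by rewrite /dotv sumr_ge0 // => i _; rewrite -expr2 sqr_ge0. Qed.
Lemma dotv_eq0 u : dotv u u = 0 -> u = 0.
Proof.
move=> H; apply/rowP => i; rewrite mxE.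
have nn : forall j : 'I_n, true -> 0 <= u 0 j * u 0 j.
  by move=> j _; rewrite -expr2 sqr_ge0.
have := @psumr_eq0P _ _ xpredT (fun i => u 0 i * u 0 i) nn H i isT.
by move=> /eqP; rewrite mulf_eq0 orbb => /eqP.
Qed.
Lemma enorm_sqr u : enorm u ^+ 2 = dotv u u.
Proof.
rewrite /enorm sqr_sqrtr; last by rewrite sumr_ge0 // => i _; rewrite sqr_ge0.
by rewrite /dotv; apply: eq_bigr => i _; rewrite expr2.
Qed.
Lemma enorm_ge0 u : 0 <= enorm u.
Proof. exact: sqrtr_ge0. Qed.
Lemma enormZ (t : R) u : enorm (t *: u) = `|t| * enorm u.
Proof.
rewrite /enorm.
have -> : \sum_(i < n) (t *: u) 0 i ^+ 2 = t ^+ 2 * \sum_(i < n) u 0 i ^+ 2.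
  by rewrite mulr_sumr; apply: eq_bigr => i _; rewrite mxE exprMn.
by rewrite sqrtrM ?sqr_ge0 // sqrtr_sqr.
Qed.
Lemma enormN u : enorm (- u) = enorm u.
Proof. by rewrite -scaleN1r enormZ normrN1 mul1r. Qed.
End Vec.
Section Dec.
Context {R : realType}.

Lemma cvx_right (psi : R -> R) zs a b : convex_rfn psi -> (forall z, psi zs <= psi z) ->
  zs <= a -> a <= b -> psi a <= psi b.
Proof.
move=> cv mn za ab.
have [bz|zb] := eqVneq b zs.
  have -> : a = b by apply/eqP; rewrite eq_le ab /= bz za.
  by [].
have zb' : zs < b by rewrite lt_neqAle eq_sym zb (le_trans za ab).
set th := (b - a) / (b - zs).
have bz0 : 0 < b - zs by rewrite subr_gt0.
have th01 : 0 <= th <= 1.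
  apply/andP; split; first by rewrite /th divr_ge0 ?subr_ge0 // ltW.
  by rewrite /th ler_pdivrMr // mul1r; lra.
have ae : a = th * zs + (1 - th) * b by rewrite /th; field; rewrite gt_eqF.
have := cv zs b th th01; rewrite -ae => H.
have := mn b; move: th01 => /andP[t0 t1] h2.
apply: (le_trans H); nra.
Qed.

Lemma cvx_left (psi : R -> R) zs a b : convex_rfn psi -> (forall z, psi zs <= psi z) ->
  a <= b -> b <= zs -> psi b <= psi a.
Proof.
move=> cv mn ab bz.
have [az|za] := eqVneq a zs.
  have -> : b = a by apply/eqP; rewrite eq_le ab /= az bz.
  by [].
have za' : a < zs by rewrite lt_neqAle za (le_trans ab bz).
set th := (b - a) / (zs - a).
have bz0 : 0 < zs - a by rewrite subr_gt0.
have th01 : 0 <= th <= 1.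
  apply/andP; split; first by rewrite /th divr_ge0 ?subr_ge0 // ltW.
  by rewrite /th ler_pdivrMr // mul1r; lra.
have be : b = th * zs + (1 - th) * a by rewrite /th; field; rewrite gt_eqF.
have := cv zs a th th01; rewrite -be => H.
have := mn a; move: th01 => /andP[t0 t1] h2.
apply: (le_trans H); nra.
Qed.

Lemma decomp_real (psi : R -> R) (up down : R -> \bar R) :
  convex_rfn psi -> mono_decomp (fun z => (psi z)%:E) up down ->
  exists U Dn : R -> R, (forall z, up z = (U z)%:E) /\ (forall z, down z = (Dn z)%:E) /\
    convex_rfn U /\ convex_rfn Dn /\ (forall s t, s <= t -> U s <= U t) /\
    (forall s t, s <= t -> Dn t <= Dn s).
Proof.
move=> cv [h1 [h2 h3]].
have [nd|nnd] := pselect (nondecr (fun z => (psi z)%:E)).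
  have [-> ->] := h1 nd.
  exists psi, (fun _ => 0); split => // ; split => //; split => //; split.
    by move=> x y t _; rewrite !mulr0 addr0.
  split => //; by move=> s t st; have := nd s t st; rewrite lee_fin.
have [ni|nni] := pselect (nonincr (fun z => (psi z)%:E)).
  have [-> ->] := h2 nnd ni.
  exists (fun _ => 0), psi; split => // ; split => //; split.
    by move=> x y t _; rewrite !mulr0 addr0.
  split => //; split => //; by move=> s t st; have := ni s t st; rewrite lee_fin.
have [zs [zmin hz]] := h3 nnd nni.
have mn : forall z, psi zs <= psi z by move=> z; have := zmin z; rewrite lee_fin.
exists (fun z => psi (Num.max z zs)), (fun z => psi (Num.min z zs) - psi zs).
split.
  move=> z; have [hl hg] := hz z.
  have [zl|zg] := leP z zs.
    by rewrite (hl zl).1 ?(max_r zl).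
  by rewrite (hg zg).1 ?(max_l (ltW zg)).
split.
  move=> z; have [hl hg] := hz z.
  have [zl|zg] := leP z zs.
    by rewrite (hl zl).2 ?(min_l zl).
  by rewrite (hg zg).2 ?(min_r (ltW zg)) ?subrr.
split.
  move=> x y t t01; move: (t01) => /andP[t0 t1].
  set M := t * Num.max x zs + (1 - t) * Num.max y zs.
  have hx : x <= Num.max x zs by rewrite le_max lexx.
  have hy : y <= Num.max y zs by rewrite le_max lexx.
  have hzx : zs <= Num.max x zs by rewrite le_max lexx orbT.
  have hzy : zs <= Num.max y zs by rewrite le_max lexx orbT.
  have zM : zs <= M by rewrite /M; nra.
  have le1 : Num.max (t * x + (1 - t) * y) zs <= M.
    rewrite ge_max zM andbT /M; nra.
  apply: le_trans (cv _ _ _ t01).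
  apply: cvx_right cv mn _ le1; by rewrite le_max lexx orbT.
split.
  move=> x y t t01; move: (t01) => /andP[t0 t1].
  set M := t * Num.min x zs + (1 - t) * Num.min y zs.
  have hx : Num.min x zs <= x by rewrite ge_min lexx.
  have hy : Num.min y zs <= y by rewrite ge_min lexx.
  have hzx : Num.min x zs <= zs by rewrite ge_min lexx orbT.
  have hzy : Num.min y zs <= zs by rewrite ge_min lexx orbT.
  have zM : M <= zs by rewrite /M; nra.
  have le1 : M <= Num.min (t * x + (1 - t) * y) zs.
    rewrite le_min zM andbT /M; nra.
  have := cv (Num.min x zs) (Num.min y zs) t t01.
  have mz : Num.min (t * x + (1 - t) * y) zs <= zs by rewrite ge_min lexx orbT.
  have := @cvx_left psi zs _ _ cv mn le1 mz => H1 H2.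
  have : psi (Num.min (t * x + (1 - t) * y) zs) <=
         t * psi (Num.min x zs) + (1 - t) * psi (Num.min y zs) by exact: le_trans H1 H2.
  lra.
split.
  move=> s t st; apply: (@cvx_right psi zs) => //; first by rewrite le_max lexx orbT.
  by rewrite ge_max !le_max st lexx /= orbT.
move=> s t st; rewrite lerD2r; apply: (@cvx_left psi zs) => //.
  by rewrite le_min !ge_min st lexx /= orbT.
by rewrite ge_min lexx orbT.
Qed.
End Dec.
Section Help.
Context {R : realType} {n m : nat}.
Local Notation vec := 'rV[R]_n.
Definition sglv (p : 'I_m) (d : vec) : 'I_m -> vec := fun q => if q == p then d else 0.
Definition sglr (p : 'I_m) (w : R) : 'I_m -> R := fun q => if q == p then w else 0.

Lemma sum_single (F : 'I_m -> R) (Pr : pred 'I_m) p :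
  (forall q, q != p -> F q = 0) -> \sum_(q | Pr q) F q = if Pr p then F p else 0.
Proof.
move=> h; case: ifP => Pp.
  rewrite (bigD1 p) //= big1 ?addr0 // => q /andP[_ qp]; exact: h.
by rewrite big1 // => q Pq; apply: h; apply/eqP => qp; move: Pq; rewrite qp Pp.
Qed.

Lemma sum_dotv_sgl (C : 'I_m -> vec) p d : \sum_q dotv (C q) (sglv p d q) = dotv (C p) d.
Proof.
rewrite (sum_single (fun q => dotv (C q) (sglv p d q)) xpredT p) /= /sglv ?eqxx //.
by move=> q /negPf ->; rewrite dotv0r.
Qed.
Lemma sum_mul_sgl (f : 'I_m -> R) p w : \sum_q f q * sglr p w q = f p * w.
Proof.
rewrite (sum_single (fun q => f q * sglr p w q) xpredT p) /= /sglr ?eqxx //.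
by move=> q /negPf ->; rewrite mulr0.
Qed.
Lemma sum_dotv_0 (C : 'I_m -> vec) : \sum_q dotv (C q) 0 = 0.
Proof. by rewrite big1 // => q _; rewrite dotv0r. Qed.
Lemma sum_mul_0 (f : 'I_m -> R) : \sum_q f q * 0 = 0.
Proof. by rewrite big1 // => q _; rewrite mulr0. Qed.

Lemma quad_zero (H : vec) (al : R) : 0 <= al ->
  (forall e, 0 <= dotv H e + al * dotv e e) -> H = 0.
Proof.
move=> al0 h; apply: dotv_eq0.
set s := - (al + 1)^-1.
have a1 : 0 < al + 1 by rewrite ltr_pwDr.
have := h (s *: H); rewrite dotvZr dotvZl dotvZr.
have -> : s * dotv H H + al * (s * (s * dotv H H)) = - dotv H H / (al + 1) ^+ 2.
  by rewrite /s; field; rewrite gt_eqF.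
rewrite pmulr_lge0 ?invr_gt0 ?exprn_gt0 // oppr_ge0 => hh.
by apply/eqP; rewrite eq_le hh dotv_ge0.
Qed.

Lemma sub_scale (f : vec -> R) (C u0 : vec) (xb : vec) (ka : R) :
  subdiff f xb u0 -> 0 <= ka -> (forall d, dotv C d <= ka * (f (xb + d) - f xb)) ->
  exists u, subdiff f xb u /\ C = ka *: u.
Proof.
move=> su0 k0 h; have [kz|kp] := eqVneq ka 0.
  exists u0; split => //; rewrite kz scale0r; apply: dotv_eq0.
  by apply/eqP; rewrite eq_le dotv_ge0 andbT; have := h C; rewrite kz mul0r.
have kp' : 0 < ka by rewrite lt_neqAle eq_sym kp k0.
exists (ka^-1 *: C); split; last by rewrite scalerA divff // scale1r.
move=> z; have := h (z - xb); rewrite [xb + _]addrC subrK dotvZl => hz.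
rewrite -lerBrDl mulrC ler_pdivrMr //; by rewrite mulrC.
Qed.
End Help.
Lemma comb_sub {R : realType} {V : lmodType R} (t : R) (x1 x2 y : V) :
  t *: x1 + (1 - t) *: x2 - y = t *: (x1 - y) + (1 - t) *: (x2 - y).
Proof.
rewrite !scalerBr addrACA -opprD -scalerDl.
have -> : t + (1 - t) = 1 by ring.
by rewrite scale1r.
Qed.

Lemma comb_add {R : realType} {V : lmodType R} (t : R) (x1 x2 d1 d2 : V) :
  t *: x1 + (1 - t) *: x2 + (t *: d1 + (1 - t) *: d2) = t *: (x1 + d1) + (1 - t) *: (x2 + d2).
Proof. by rewrite !scalerDr addrACA. Qed.

Lemma bigmax_idx_le {R : realType} (I : finType) (x0 : R) (F : I -> R) (Pr : pred I) :
  x0 <= \big[Num.max/x0]_(i | Pr i) F i.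
Proof. by elim/big_rec: _ => // i y _ Hy; rewrite le_max Hy orbT. Qed.

Lemma dotv_comb {R : realType} {n : nat} (t : R) (u v : 'rV[R]_n) : 0 <= t <= 1 ->
  dotv (t *: u + (1 - t) *: v) (t *: u + (1 - t) *: v) <= t * dotv u u + (1 - t) * dotv v v.
Proof.
move=> /andP[t0 t1].
have h := dotv_ge0 (u - v).
rewrite !dotvDl !dotvDr !dotvZl !dotvZr (dotvC v u).
rewrite !dotvBl !dotvBr (dotvC v u) in h.
set uu := dotv u u in h *; set vv := dotv v v in h *; set uv := dotv u v in h *.
have : 0 <= t * (1 - t) * (uu - uv - (uv - vv)) by rewrite mulr_ge0 // mulr_ge0 // subr_ge0.
move=> h2; nra.
Qed.

Section KKT.
Context {R : realType} {n m : nat} (P : cp1 R n m) (M : padc R n m).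
Local Notation vec := 'rV[R]_n.
Local Notation T := ((('I_m * 'I_n) + ('I_m * 'I_n)) + (('I_m + 'I_m) + 'I_1))%type.

Definition pd1 (Pv : T -> R) p : vec := \row_i Pv (inl (inl (p, i))).
Definition pd2 (Pv : T -> R) p : vec := \row_i Pv (inl (inr (p, i))).
Definition pw1 (Pv : T -> R) p : R := Pv (inr (inl (inl p))).
Definition pw2 (Pv : T -> R) p : R := Pv (inr (inl (inr p))).
Definition pw0 (Pv : T -> R) : R := Pv (inr (inr ord0)).
Definition mkP (D1 D2 : 'I_m -> vec) (W1 W2 : 'I_m -> R) (W0 : R) : T -> R :=
  fun z => match z with
  | inl (inl (p, i)) => D1 p 0 i
  | inl (inr (p, i)) => D2 p 0 i
  | inr (inl (inl p)) => W1 p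
  | inr (inl (inr p)) => W2 p
  | inr (inr _) => W0 end.

Lemma pd1_mk D1 D2 W1 W2 W0 : pd1 (mkP D1 D2 W1 W2 W0) = D1.
Proof. by apply/funext => p; apply/rowP => i; rewrite mxE. Qed.
Lemma pd2_mk D1 D2 W1 W2 W0 : pd2 (mkP D1 D2 W1 W2 W0) = D2.
Proof. by apply/funext => p; apply/rowP => i; rewrite mxE. Qed.
Lemma pd1_0 : pd1 (fun _ => 0) = fun _ => 0.
Proof. by apply/funext => p; apply/rowP => i; rewrite !mxE. Qed.
Lemma pd2_0 : pd2 (fun _ => 0) = fun _ => 0.
Proof. by apply/funext => p; apply/rowP => i; rewrite !mxE. Qed.
Lemma pd1_comb t P1 P2 p : pd1 (ccomb t P1 P2) p = t *: pd1 P1 p + (1 - t) *: pd1 P2 p.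
Proof. by apply/rowP => i; rewrite !mxE. Qed.
Lemma pd2_comb t P1 P2 p : pd2 (ccomb t P1 P2) p = t *: pd2 P1 p + (1 - t) *: pd2 P2 p.
Proof. by apply/rowP => i; rewrite !mxE. Qed.

Lemma tdot_mk (c : T -> R) D1 D2 W1 W2 W0 :
  tdot c (mkP D1 D2 W1 W2 W0) =
  \sum_p dotv (pd1 c p) (D1 p) + \sum_p dotv (pd2 c p) (D2 p) +
  \sum_p pw1 c p * W1 p + \sum_p pw2 c p * W2 p + pw0 c * W0.
Proof.
rewrite /tdot !big_sumType /= big_ord1 !addrA; congr (_ + _ + _ + _ + _).
- rewrite (eq_bigr (fun pi => c (inl (inl (pi.1, pi.2))) * D1 pi.1 0 pi.2)); last by case.
  rewrite -(pair_bigA _ (fun p i => c (inl (inl (p, i))) * D1 p 0 i)).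
  by apply: eq_bigr => p _; rewrite /dotv; apply: eq_bigr => i _; rewrite mxE.
- rewrite (eq_bigr (fun pi => c (inl (inr (pi.1, pi.2))) * D2 pi.1 0 pi.2)); last by case.
  rewrite -(pair_bigA _ (fun p i => c (inl (inr (p, i))) * D2 p 0 i)).
  by apply: eq_bigr => p _; rewrite /dotv; apply: eq_bigr => i _; rewrite mxE.
Qed.

Variables (k : nat) (xc xb : vec) (U Dn : 'I_m -> R -> R).

Definition fupP p (x d : vec) (w : R) : R :=
  gk P k p (x + d) - hk P k p xc - dotv (asel M k p xc) (x - xc) + sigma M k p - w.
Definition floP p (x d : vec) (w : R) : R :=
  gk P k p xc + dotv (bsel M k p xc) (x - xc) - hk P k p (x + d) - w.
Definition qf (x : vec) : R := lam M / 2 * enorm (x - xc) ^+ 2.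
Definition Phi (x : vec) : R :=
  \sum_(p < m | (p < m1 P)%N) (U p (fup P M k p x xc) + Dn p (flo P M k p x xc)) + qf x.
Definition ObjD (x : vec) (D1 D2 : 'I_m -> vec) (W1 W2 : 'I_m -> R) (W0 : R) : R :=
  \sum_(p < m | (p < m1 P)%N) (U p (fupP p x (D1 p) (W1 p)) + Dn p (floP p x (D2 p) (W2 p)))
  + qf x - Phi xb - W0.
Definition JD (x : vec) (D1 D2 : 'I_m -> vec) (W1 W2 : 'I_m -> R) (W0 : R) : R :=
  \big[Num.max/ObjD x D1 D2 W1 W2 W0]_(p < m | (m1 P <= p)%N) fupP p x (D1 p) (W1 p).
Definition JJ (x : vec) (Pv : T -> R) : R := JD x (pd1 Pv) (pd2 Pv) (pw1 Pv) (pw2 Pv) (pw0 Pv).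

Lemma fupP0 p x : fupP p x 0 0 = fup P M k p x xc.
Proof. by rewrite /fupP /fup addr0 subr0. Qed.
Lemma floP0 p x : floP p x 0 0 = flo P M k p x xc.
Proof. by rewrite /floP /flo addr0 subr0. Qed.

Lemma JJ_mk x D1 D2 W1 W2 W0 : JJ x (mkP D1 D2 W1 W2 W0) = JD x D1 D2 W1 W2 W0.
Proof. by rewrite /JJ pd1_mk pd2_mk. Qed.

Lemma JD_le x D1 D2 W1 W2 W0 r : ObjD x D1 D2 W1 W2 W0 <= r ->
  (forall j : 'I_m, (m1 P <= j)%N -> fupP j x (D1 j) (W1 j) <= r) -> JD x D1 D2 W1 W2 W0 <= r.
Proof. by move=> h1 h2; apply: bigmax_le. Qed.

Hypothesis Hcvx : forall k p, convex_fn (gk P k p) /\ convex_fn (hk P k p).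
Hypothesis HU : forall p : 'I_m, (p < m1 P)%N -> convex_rfn (U p) /\ convex_rfn (Dn p) /\
    (forall s t, s <= t -> U p s <= U p t) /\ (forall s t, s <= t -> Dn p t <= Dn p s).

Lemma fupP_cvx p x1 x2 d1 d2 w1 w2 t : 0 <= t <= 1 ->
  fupP p (t *: x1 + (1 - t) *: x2) (t *: d1 + (1 - t) *: d2) (t * w1 + (1 - t) * w2) <=
  t * fupP p x1 d1 w1 + (1 - t) * fupP p x2 d2 w2.
Proof.
move=> t01; rewrite /fupP comb_add comb_sub [dotv _ (t *: _ + _)]dotvDr !dotvZr.
have := (Hcvx k p).1 (x1 + d1) (x2 + d2) t t01; lra.
Qed.

Lemma floP_cvx p x1 x2 d1 d2 w1 w2 t : 0 <= t <= 1 ->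
  t * floP p x1 d1 w1 + (1 - t) * floP p x2 d2 w2 <=
  floP p (t *: x1 + (1 - t) *: x2) (t *: d1 + (1 - t) *: d2) (t * w1 + (1 - t) * w2).
Proof.
move=> t01; rewrite /floP comb_add comb_sub [dotv _ (t *: _ + _)]dotvDr !dotvZr.
have := (Hcvx k p).2 (x1 + d1) (x2 + d2) t t01; lra.
Qed.

Hypothesis Hlam : 0 < lam M.

Lemma qf_cvx x1 x2 t : 0 <= t <= 1 ->
  qf (t *: x1 + (1 - t) *: x2) <= t * qf x1 + (1 - t) * qf x2.
Proof.
move=> t01; rewrite /qf comb_sub !enorm_sqr.
have := dotv_comb t (x1 - xc) (x2 - xc) t01.
have l0 : 0 <= lam M / 2 by rewrite divr_ge0 // ltW.
move=> h; move: t01 => /andP[t0 t1]; nra.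
Qed.

Lemma pd1_combF t P1 P2 : pd1 (ccomb t P1 P2) = fun p => t *: pd1 P1 p + (1 - t) *: pd1 P2 p.
Proof. by apply/funext => p; exact: pd1_comb. Qed.
Lemma pd2_combF t P1 P2 : pd2 (ccomb t P1 P2) = fun p => t *: pd2 P1 p + (1 - t) *: pd2 P2 p.
Proof. by apply/funext => p; exact: pd2_comb. Qed.

Lemma ObjD_cvx x1 x2 D1 D2 E1 E2 W1 W2 V1 V2 W0 V0 t : 0 <= t <= 1 ->
  ObjD (t *: x1 + (1 - t) *: x2) (fun p => t *: D1 p + (1 - t) *: D2 p)
    (fun p => t *: E1 p + (1 - t) *: E2 p) (fun p => t * W1 p + (1 - t) * W2 p)
    (fun p => t * V1 p + (1 - t) * V2 p) (t * W0 + (1 - t) * V0) <=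
  t * ObjD x1 D1 E1 W1 V1 W0 + (1 - t) * ObjD x2 D2 E2 W2 V2 V0.
Proof.
move=> t01; rewrite /ObjD.
set S := \sum_(p < m | _) _.
set S1 := \sum_(p < m | _) _.
set S2 := \sum_(p < m | _) _.
have hS : S <= t * S1 + (1 - t) * S2.
  rewrite /S /S1 /S2 !mulr_sumr -big_split /=; apply: ler_sum => p pm.
  have [cU [cD [mU mD]]] := HU p pm.
  have h1 := fupP_cvx p x1 x2 (D1 p) (D2 p) (W1 p) (W2 p) t t01.
  have h2 := floP_cvx p x1 x2 (E1 p) (E2 p) (V1 p) (V2 p) t t01.
  have h3 := cU (fupP p x1 (D1 p) (W1 p)) (fupP p x2 (D2 p) (W2 p)) t t01.
  have h4 := cD (floP p x1 (E1 p) (V1 p)) (floP p x2 (E2 p) (V2 p)) t t01.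
  have h5 := mU _ _ h1.
  have h6 := mD _ _ h2.
  lra.
have := qf_cvx x1 x2 t t01; lra.
Qed.

Lemma JJ_cvx x1 x2 P1 P2 t : 0 <= t <= 1 ->
  JJ (t *: x1 + (1 - t) *: x2) (ccomb t P1 P2) <= t * JJ x1 P1 + (1 - t) * JJ x2 P2.
Proof.
move=> t01; move: (t01) => /andP[t0 t1].
have t1' : 0 <= 1 - t by rewrite subr_ge0.
rewrite /JJ pd1_combF pd2_combF; apply: JD_le.
  apply: le_trans (ObjD_cvx _ _ _ _ _ _ _ _ _ _ _ _ _ t01) _.
  by apply: lerD; apply: ler_wpM2l => //; apply: bigmax_idx_le.
move=> j jm; apply: le_trans (fupP_cvx _ _ _ _ _ _ _ _ t01) _.
by apply: lerD; apply: ler_wpM2l => //; apply: le_bigmax_cond.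
Qed.


Hypothesis Hsol : subsol P M k xc xb.
Hypothesis HUe : forall p : 'I_m, (p < m1 P)%N -> forall z, phiU P p z = (U p z)%:E.
Hypothesis HDe : forall p : 'I_m, (p < m1 P)%N -> forall z, phiD P p z = (Dn p z)%:E.

Lemma subobjE x : subobj P M k x xc = (Phi x)%:E.
Proof.
rewrite /subobj /Phi EFinD -sumEFin; congr (_ + _)%E.
apply: eq_bigr => p pm; rewrite /Fhat HUe // HDe //.
Qed.

Lemma ObjD_xb D1 D2 W1 W2 W0 : ObjD xb D1 D2 W1 W2 W0 =
  \sum_(q < m | (q < m1 P)%N) ((U q (fupP q xb (D1 q) (W1 q)) + Dn q (floP q xb (D2 q) (W2 q)))
     - (U q (fup P M k q xb xc) + Dn q (flo P M k q xb xc))) - W0.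
Proof. rewrite /ObjD /Phi sumrB; lra. Qed.

Lemma fup_le0 (j : 'I_m) : (m1 P <= j)%N -> fup P M k j xb xc <= 0.
Proof. by move=> jm; exact: Hsol.1. Qed.

Lemma JJ_xb0 : JJ xb (fun _ => 0) = 0.
Proof.
rewrite /JJ pd1_0 pd2_0; apply/eqP; rewrite eq_le; apply/andP; split.
  apply: JD_le; first by rewrite ObjD_xb big1 ?subrr // => q _; rewrite fupP0 floP0 subrr.
  by move=> j jm; rewrite fupP0; exact: fup_le0 _ jm.
apply: le_trans (bigmax_idx_le _ _ _ _).
by rewrite ObjD_xb big1 ?subrr // => q _; rewrite fupP0 floP0 subrr.
Qed.

Lemma JJ_min x : JJ xb (fun _ => 0) <= JJ x (fun _ => 0).
Proof.
rewrite JJ_xb0 /JJ pd1_0 pd2_0.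
have [feas|nfeas] := pselect (sub_feas P M k x xc).
  have := Hsol.2 x feas; rewrite !subobjE lee_fin => hPhi.
  apply: le_trans (bigmax_idx_le _ _ _ _).
  rewrite /ObjD.
  have -> : \sum_(p < m | (p < m1 P)%N) (U p (fupP p x 0 0) + Dn p (floP p x 0 0)) + qf x = Phi x.
    by rewrite /Phi; congr (_ + _); apply: eq_bigr => p _; rewrite fupP0 floP0.
  rewrite /pw0; lra.
move/existsNP: nfeas => [j /not_implyP [jm /negP]]; rewrite -ltNge => hj.
apply: le_trans (ltW hj) _; rewrite -fupP0.
rewrite /JD; exact: (le_bigmax_cond _ (fun p => fupP p x 0 (pw1 (fun=> 0) p)) jm).
Qed.

Lemma exists_c : exists c : T -> R, forall x D1 D2 W1 W2 W0 r,
  ObjD x D1 D2 W1 W2 W0 <= r -> (forall j : 'I_m, (m1 P <= j)%N -> fupP j x (D1 j) (W1 j) <= r) ->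
  tdot c (mkP D1 D2 W1 W2 W0) <= r.
Proof.
have [c Hc] := core JJ xb JJ_cvx JJ_min.
exists c => x D1 D2 W1 W2 W0 r h1 h2.
have := Hc x (mkP D1 D2 W1 W2 W0); rewrite JJ_xb0 add0r JJ_mk => h.
exact: le_trans h (JD_le _ _ _ _ _ _ _ h1 h2).
Qed.


Lemma fupP_w p x w : fupP p x 0 w = fup P M k p x xc - w.
Proof. by rewrite /fupP /fup addr0. Qed.
Lemma floP_w p x w : floP p x 0 w = flo P M k p x xc - w.
Proof. by rewrite /floP /flo addr0. Qed.
Lemma fupP_g p d : fupP p xb d (gk P k p (xb + d) - gk P k p xb) = fup P M k p xb xc.
Proof. rewrite /fupP /fup; lra. Qed.
Lemma floP_h p d : floP p xb d (- (hk P k p (xb + d) - hk P k p xb)) = flo P M k p xb xc.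
Proof. rewrite /floP /flo; lra. Qed.
Lemma fupP_shift q e : fupP q (xb + e) (- e) (- dotv (asel M k q xc) e) = fup P M k q xb xc.
Proof.
rewrite /fupP /fup addrK; set w := xb - xc.
have -> : xb + e - xc = w + e by rewrite /w addrAC.
rewrite dotvDr; lra.
Qed.
Lemma floP_shift q e : floP q (xb + e) (- e) (dotv (bsel M k q xc) e) = flo P M k q xb xc.
Proof.
rewrite /floP /flo addrK; set w := xb - xc.
have -> : xb + e - xc = w + e by rewrite /w addrAC.
rewrite dotvDr; lra.
Qed.
Lemma qf_shift e : qf (xb + e) - qf xb = lam M * dotv (xb - xc) e + lam M / 2 * dotv e e.
Proof.
rewrite /qf !enorm_sqr; set w := xb - xc.
have -> : xb + e - xc = w + e by rewrite /w addrAC.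
rewrite (dotvDl (w + e) w e) (dotvDr w w e) (dotvDr e w e) (dotvC e w); lra.
Qed.

Section Ext.
Variable c : T -> R.
Hypothesis Hc : forall x D1 D2 W1 W2 W0 r,
  ObjD x D1 D2 W1 W2 W0 <= r -> (forall j : 'I_m, (m1 P <= j)%N -> fupP j x (D1 j) (W1 j) <= r) ->
  tdot c (mkP D1 D2 W1 W2 W0) <= r.

Lemma F1 (p : 'I_m) (d : vec) (w W0 : R) :
  (if (p < m1 P)%N then U p (fupP p xb d w) - U p (fup P M k p xb xc) else 0) - W0 <= 0 ->
  ((m1 P <= p)%N -> fupP p xb d w <= 0) ->
  dotv (pd1 c p) d + pw1 c p * w + pw0 c * W0 <= 0.
Proof.
move=> h1 h2.
have := Hc xb (sglv p d) (fun _ => 0) (sglr p w) (fun _ => 0) W0 0.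
rewrite tdot_mk sum_dotv_sgl sum_dotv_0 sum_mul_sgl sum_mul_0 !addr0; apply.
  rewrite ObjD_xb (sum_single _ _ p); last first.
    by move=> q qp; rewrite /sglv /sglr (negPf qp) fupP0 floP0 subrr.
  rewrite /sglv /sglr eqxx floP0; move: h1; case: ifP => // _; lra.
move=> j jm; rewrite /sglv /sglr; case: (eqVneq j p) => [ejp|jp].
  by rewrite ejp; apply: h2; rewrite -ejp.
by rewrite fupP0; exact: fup_le0 _ jm.
Qed.

Lemma F2 (p : 'I_m) (d : vec) (w W0 : R) :
  (if (p < m1 P)%N then Dn p (floP p xb d w) - Dn p (flo P M k p xb xc) else 0) - W0 <= 0 ->
  dotv (pd2 c p) d + pw2 c p * w + pw0 c * W0 <= 0.
Proof.
move=> h1.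
have := Hc xb (fun _ => 0) (sglv p d) (fun _ => 0) (sglr p w) W0 0.
rewrite tdot_mk sum_dotv_sgl sum_dotv_0 sum_mul_sgl sum_mul_0 add0r addr0; apply.
  rewrite ObjD_xb (sum_single _ _ p); last first.
    by move=> q qp; rewrite /sglv /sglr (negPf qp) fupP0 floP0 subrr.
  rewrite /sglv /sglr eqxx fupP0; move: h1; case: ifP => // _; lra.
by move=> j jm; rewrite fupP0; exact: fup_le0 _ jm.
Qed.

Lemma pw0_le : pw0 c <= 0.
Proof.
have := Hc xb (fun _ => 0) (fun _ => 0) (fun _ => 0) (fun _ => 0) 1 0.
rewrite tdot_mk !sum_dotv_0 !sum_mul_0 !add0r mulr1; apply.
  by rewrite ObjD_xb big1 ?sub0r ?lerN10 // => q _; rewrite fupP0 floP0 subrr.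
by move=> j jm; rewrite fupP0; exact: fup_le0 _ jm.
Qed.

Lemma norm_ineq : \sum_(q < m | (m1 P <= q)%N) pw1 c q + pw0 c <= -1.
Proof.
have := Hc xb (fun _ => 0) (fun _ => 0) (fun q => if (m1 P <= q)%N then 1 else 0) (fun _ => 0) 1 (-1).
rewrite tdot_mk !sum_dotv_0 sum_mul_0 !add0r addr0 mulr1.
have -> : \sum_q pw1 c q * (if (m1 P <= q)%N then 1 else 0) = \sum_(q < m | (m1 P <= q)%N) pw1 c q.
  by rewrite [RHS]big_mkcond; apply: eq_bigr => q _; case: ifP; rewrite ?mulr1 ?mulr0.
apply.
  rewrite ObjD_xb big1 ?sub0r // => q qm.
  have -> : (m1 P <= q)%N = false by rewrite leqNgt qm.
  by rewrite fupP0 floP0 subrr.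
move=> j jm; rewrite jm fupP_w; have := fup_le0 j jm; lra.
Qed.

Lemma xshift e : \sum_p dotv (pd1 c p) (- e) + \sum_p dotv (pd2 c p) (- e) +
  \sum_p pw1 c p * (- dotv (asel M k p xc) e) + \sum_p pw2 c p * dotv (bsel M k p xc) e +
  pw0 c * (qf (xb + e) - qf xb) <= 0.
Proof.
have := Hc (xb + e) (fun _ => - e) (fun _ => - e) (fun q => - dotv (asel M k q xc) e)
  (fun q => dotv (bsel M k q xc) e) (qf (xb + e) - qf xb) 0.
rewrite tdot_mk; apply.
  rewrite /ObjD.
  have -> : \sum_(p < m | (p < m1 P)%N) (U p (fupP p (xb + e) (- e) (- dotv (asel M k p xc) e)) +
      Dn p (floP p (xb + e) (- e) (dotv (bsel M k p xc) e))) =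
      \sum_(p < m | (p < m1 P)%N) (U p (fup P M k p xb xc) + Dn p (flo P M k p xb xc)).
    by apply: eq_bigr => p _; rewrite fupP_shift floP_shift.
  rewrite /Phi; lra.
by move=> j jm; rewrite fupP_shift; exact: fup_le0 _ jm.
Qed.


Hypothesis Hh : forall k p y, subdiff (hk P k p) y (asel M k p y).
Hypothesis Hg : forall k p y, subdiff (gk P k p) y (bsel M k p y).
Hypothesis HA6 : Assumption6 P M.

Lemma kkt_c : exists (y1 y2 : 'I_m -> R) (v1 v2 : 'I_m -> vec),
  (forall p, dup P M k p xb xc (v1 p)) /\ (forall p, dlo P M k p xb xc (v2 p)) /\
  \sum_p (y1 p *: v1 p + y2 p *: v2 p) + lam M *: (xb - xc) = 0 /\
  (forall p : 'I_m, (p < m1 P)%N ->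
     (forall s, U p (fup P M k p xb xc) + y1 p * (s - fup P M k p xb xc) <= U p s) /\
     (forall s, Dn p (flo P M k p xb xc) + y2 p * (s - flo P M k p xb xc) <= Dn p s)) /\
  (forall p : 'I_m, (m1 P <= p)%N -> 0 <= y1 p /\ y1 p * fup P M k p xb xc = 0 /\ y2 p = 0).
Proof.
have l0ge : 0 <= - pw0 c by rewrite oppr_ge0 pw0_le.
have k1ge : forall p, 0 <= - pw1 c p.
  move=> p; have := F1 p 0 1 0; rewrite dotv0r add0r mulr1 mulr0 addr0 oppr_ge0; apply.
    rewrite subr0; case: ifP => // pm; rewrite fupP_w subr_le0.
    by have [_ [_ [mU _]]] := HU p pm; apply: mU; lra.
  by move=> pm; rewrite fupP_w; have := fup_le0 p pm; lra.
have k1sub : forall p d, dotv (pd1 c p) d <= (- pw1 c p) * (gk P k p (xb + d) - gk P k p xb).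
  move=> p d; have := F1 p d (gk P k p (xb + d) - gk P k p xb) 0.
  rewrite mulr0 addr0 fupP_g subrr subr0 mulNr => h.
  have : dotv (pd1 c p) d + pw1 c p * (gk P k p (xb + d) - gk P k p xb) <= 0.
    by apply: h; [case: ifP | move=> pm; exact: fup_le0].
  lra.
have compl : forall p : 'I_m, (m1 P <= p)%N -> pw1 c p * fup P M k p xb xc <= 0.
  move=> p pm; have := F1 p 0 (fup P M k p xb xc) 0.
  rewrite dotv0r add0r mulr0 addr0; apply.
    by rewrite ltnNge pm /= subr0.
  by move=> _; rewrite fupP_w subrr.
have Usub : forall p : 'I_m, (p < m1 P)%N -> forall s,
    pw1 c p * (fup P M k p xb xc - s) + pw0 c * (U p s - U p (fup P M k p xb xc)) <= 0.
  move=> p pm s; have := F1 p 0 (fup P M k p xb xc - s) (U p s - U p (fup P M k p xb xc)).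
  rewrite dotv0r add0r; apply.
    rewrite pm fupP_w; set f := fup P M k p xb xc.
    have -> : f - (f - s) = s by ring.
    by rewrite subrr.
  by rewrite leqNgt pm.
have k2ge : forall p, 0 <= pw2 c p.
  move=> p; have := F2 p 0 (-1) 0; rewrite dotv0r add0r mulr0 addr0 mulrN1 oppr_le0; apply.
  rewrite subr0; case: ifP => // pm; rewrite floP_w opprK subr_le0.
  by have [_ [_ [_ mD]]] := HU p pm; apply: mD; lra.
have k2sub : forall p d, dotv (pd2 c p) d <= pw2 c p * (hk P k p (xb + d) - hk P k p xb).
  move=> p d; have := F2 p d (- (hk P k p (xb + d) - hk P k p xb)) 0.
  rewrite mulr0 addr0 floP_h subrr subr0 mulrN => h.
  have : dotv (pd2 c p) d - pw2 c p * (hk P k p (xb + d) - hk P k p xb) <= 0.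
    by apply: h; case: ifP.
  lra.
have k2z : forall p : 'I_m, (m1 P <= p)%N -> pw2 c p = 0.
  move=> p pm; have := F2 p 0 1 0; rewrite dotv0r add0r mulr0 addr0 mulr1.
  rewrite ltnNge pm /= subr0 => /(_ (lexx _)) h.
  by apply/eqP; rewrite eq_le h k2ge.
have Dsub : forall p : 'I_m, (p < m1 P)%N -> forall s,
    pw2 c p * (flo P M k p xb xc - s) + pw0 c * (Dn p s - Dn p (flo P M k p xb xc)) <= 0.
  move=> p pm s; have := F2 p 0 (flo P M k p xb xc - s) (Dn p s - Dn p (flo P M k p xb xc)).
  rewrite dotv0r add0r; apply.
  rewrite pm floP_w; set f := flo P M k p xb xc.
  have -> : f - (f - s) = s by ring.
  by rewrite subrr.
have hu : forall p, exists u : vec, subdiff (gk P k p) xb u /\ pd1 c p = (- pw1 c p) *: u.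
  move=> p; exact: (sub_scale _ _ _ _ _ (Hg k p xb) (k1ge p) (k1sub p)).
have [u Hu] := choice hu.
have hu' : forall p, exists u : vec, subdiff (hk P k p) xb u /\ pd2 c p = (pw2 c p) *: u.
  move=> p; exact: (sub_scale _ _ _ _ _ (Hh k p xb) (k2ge p) (k2sub p)).
have [u' Hu'] := choice hu'.
set l0 := - pw0 c.
set G := \sum_p ((- pw1 c p) *: (u p - asel M k p xc) - pw2 c p *: (bsel M k p xc - u' p)).
have HG : G + (l0 * lam M) *: (xb - xc) = 0.
  apply: (@quad_zero _ _ _ (l0 * lam M / 2)).
    by rewrite divr_ge0 // mulr_ge0 // ltW.
  move=> e; have := xshift e; rewrite qf_shift.
  have -> : \sum_p dotv (pd1 c p) (- e) + \sum_p dotv (pd2 c p) (- e) +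
      \sum_p pw1 c p * - dotv (asel M k p xc) e + \sum_p pw2 c p * dotv (bsel M k p xc) e =
      - dotv G e.
    rewrite dotv_suml -sumrN -!big_split /=; apply: eq_bigr => p _.
    rewrite (Hu p).2 (Hu' p).2 !dotvNr !dotvZl !dotvBl !dotvZl !dotvBl; ring.
  rewrite (dotvDl e G ((l0 * lam M) *: (xb - xc))) (dotvZl e (xb - xc) (l0 * lam M)) /l0; lra.
have l0p : 0 < l0.
  rewrite lt_neqAle l0ge andbT; apply/negP => /eqP l0z.
  have pw00 : pw0 c = 0 by rewrite -[pw0 c]opprK -/l0 -l0z oppr0.
  have k1z : forall p : 'I_m, (p < m1 P)%N -> pw1 c p = 0.
    move=> p pm; have := Usub p pm (fup P M k p xb xc + 1).
    rewrite pw00 mul0r addr0 => h.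
    have := k1ge p; lra.
  have k2z' : forall p, pw2 c p = 0.
    move=> p; case: (ltnP p (m1 P)) => pm; last exact: k2z.
    have := Dsub p pm (flo P M k p xb xc - 1).
    rewrite pw00 mul0r addr0 => h.
    have := k2ge p; lra.
  have G0 : \sum_(p < m | (m1 P <= p)%N) (- pw1 c p) *: (u p - asel M k p xc) = 0.
    have -> : \sum_(p < m | (m1 P <= p)%N) (- pw1 c p) *: (u p - asel M k p xc) = G.
      rewrite /G big_mkcond; apply: eq_bigr => p _; rewrite k2z' scale0r subr0.
      case: ifP => // pm; rewrite k1z ?oppr0 ?scale0r //.
      by rewrite ltnNge pm.
    by move: HG; rewrite -l0z mul0r scale0r addr0.
  have y0 : forall p : 'I_m, (m1 P <= p)%N -> - pw1 c p = 0.
    apply: (HA6 k xc xb Hsol (fun p => - pw1 c p)).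
      move=> p pm; split; first exact: fup_le0.
      move=> s s0; have := compl p pm; have := k1ge p.
      move: s0; rewrite /= => s0 h1 h2; nra.
    exists (fun p => u p - asel M k p xc); split => //.
    by move=> p pm; exists (u p) => //; exact: (Hu p).1.
  have := norm_ineq.
  rewrite big1 ?add0r; last by move=> p pm; rewrite -[pw1 c p]opprK y0 // oppr0.
  by rewrite pw00; lra.
exists (fun p => - pw1 c p / l0), (fun p => - pw2 c p / l0),
  (fun p => u p - asel M k p xc), (fun p => bsel M k p xc - u' p).
split; first by move=> p; exists (u p) => //; exact: (Hu p).1.
split; first by move=> p; exists (u' p) => //; exact: (Hu' p).1.
split.
  have -> : \sum_p ((- pw1 c p / l0) *: (u p - asel M k p xc) +
        (- pw2 c p / l0) *: (bsel M k p xc - u' p)) = l0^-1 *: G.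
    rewrite /G scaler_sumr; apply: eq_bigr => p _.
    rewrite [RHS]scalerBr ![in RHS]scalerA -scaleNr; congr (_ *: _ + _ *: _); ring.
  apply: (scalerI (a := l0)); first by rewrite gt_eqF.
  by rewrite scalerDr scalerA divff ?gt_eqF // scale1r scalerA HG scaler0.
split.
  move=> p pm; split => s.
    have := Usub p pm s => h; rewrite -subr_ge0.
    set f := fup P M k p xb xc.
    have -> : U p s - (U p f + - pw1 c p / l0 * (s - f)) =
        (l0 * (U p s - U p f) + pw1 c p * (s - f)) / l0 by field; rewrite gt_eqF.
    rewrite divr_ge0 ?(ltW l0p) //.
    have -> : l0 * (U p s - U p f) + pw1 c p * (s - f) =
      - (pw1 c p * (f - s) + pw0 c * (U p s - U p f)) by rewrite /l0; ring.
    by rewrite oppr_ge0.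
  have := Dsub p pm s => h; rewrite -subr_ge0.
  set f := flo P M k p xb xc.
  have -> : Dn p s - (Dn p f + - pw2 c p / l0 * (s - f)) =
      (l0 * (Dn p s - Dn p f) + pw2 c p * (s - f)) / l0 by field; rewrite gt_eqF.
  rewrite divr_ge0 ?(ltW l0p) //.
  have -> : l0 * (Dn p s - Dn p f) + pw2 c p * (s - f) =
    - (pw2 c p * (f - s) + pw0 c * (Dn p s - Dn p f)) by rewrite /l0; ring.
  by rewrite oppr_ge0.
move=> p pm; split; first by rewrite divr_ge0 // ltW.
split; last by rewrite k2z // oppr0 mul0r.
rewrite mulrAC; apply/eqP; rewrite mulf_eq0; apply/orP; left.
have := compl p pm; have := k1ge p; have := fup_le0 p pm => h1 h2 h3.
by apply/eqP; nra.
Qed.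
End Ext.

Hypothesis Hh : forall k p y, subdiff (hk P k p) y (asel M k p y).
Hypothesis Hg : forall k p y, subdiff (gk P k p) y (bsel M k p y).
Hypothesis HA6 : Assumption6 P M.

Lemma kkt_U : exists (y1 y2 : 'I_m -> R) (v1 v2 : 'I_m -> vec),
  (forall p, dup P M k p xb xc (v1 p)) /\ (forall p, dlo P M k p xb xc (v2 p)) /\
  \sum_p (y1 p *: v1 p + y2 p *: v2 p) + lam M *: (xb - xc) = 0 /\
  (forall p : 'I_m, (p < m1 P)%N ->
     (forall s, U p (fup P M k p xb xc) + y1 p * (s - fup P M k p xb xc) <= U p s) /\
     (forall s, Dn p (flo P M k p xb xc) + y2 p * (s - flo P M k p xb xc) <= Dn p s)) /\
  (forall p : 'I_m, (m1 P <= p)%N -> 0 <= y1 p /\ y1 p * fup P M k p xb xc = 0 /\ y2 p = 0).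
Proof. have [c Hc] := exists_c; exact: kkt_c Hc Hh Hg HA6. Qed.

End KKT.

Lemma nondecr_ind {R : realType} : nondecr (@ind_nonpos R).
Proof.
move=> s t st; rewrite /ind_nonpos; case: (leP t 0) => t0; last first.
  by case: ifP => _; rewrite ?leey.
by rewrite (le_trans st t0).
Qed.

Lemma kkt_final {R : realType} {n m : nat} (P : cp1 R n m) (M : padc R n m) k xc xb :
  cp1_wf P -> method_wf P M -> Assumption6 P M -> subsol P M k xc xb ->
  exists (y1 y2 : 'I_m -> R) (v1 v2 : 'I_m -> 'rV[R]_n),
  (forall p, dup P M k p xb xc (v1 p)) /\ (forall p, dlo P M k p xb xc (v2 p)) /\
  \sum_p (y1 p *: v1 p + y2 p *: v2 p) + lam M *: (xb - xc) = 0 /\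
  (forall p, esubdiff (phiU P p) (fup P M k p xb xc) (y1 p) /\
             esubdiff (phiD P p) (flo P M k p xb xc) (y2 p)).
Proof.
move=> [m1m [Hpsi [Hind [Hdec Hcvx]]]] Hwf HA6 Hsol.
have [Hlam [_ [_ [_ [_ [_ [_ [_ [_ [Hh Hg]]]]]]]]]] := Hwf.
have hUD : forall p : 'I_m, exists UD : (R -> R) * (R -> R), (p < m1 P)%N ->
   (convex_rfn UD.1 /\ convex_rfn UD.2 /\
    (forall s t, s <= t -> UD.1 s <= UD.1 t) /\ (forall s t, s <= t -> UD.2 t <= UD.2 s)) /\
   (forall z, phiU P p z = (UD.1 z)%:E) /\ (forall z, phiD P p z = (UD.2 z)%:E).
  move=> p; case: (ltnP p (m1 P)) => pm; last by exists (fun _ => 0, fun _ => 0).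
  have [psi [cpsi epsi]] := Hpsi p pm.
  have := Hdec p; rewrite epsi => hd.
  have [U [Dn [eU [eD [cU [cD [mU mD]]]]]]] := decomp_real _ _ _ cpsi hd.
  by exists (U, Dn) => _ /=; split.
have [UD HUD] := choice hUD.
have := @kkt_U R n m P M k xc xb (fun p => (UD p).1) (fun p => (UD p).2) Hcvx
  (fun p pm => (HUD p pm).1) Hlam Hsol (fun p pm => (HUD p pm).2.1) (fun p pm => (HUD p pm).2.2)
  Hh Hg HA6.
move=> [y1 [y2 [v1 [v2 [h1 [h2 [h3 [h4 h5]]]]]]]].
exists y1, y2, v1, v2; split => //; split => //; split => //.
move=> p; case: (ltnP p (m1 P)) => pm.
  have [hu hd] := h4 p pm.
  rewrite /esubdiff; split; split.
  - by rewrite (HUD p pm).2.1.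
  - by move=> s; rewrite !(HUD p pm).2.1 -EFinD lee_fin; exact: hu.
  - by rewrite (HUD p pm).2.2.
  - by move=> s; rewrite !(HUD p pm).2.2 -EFinD lee_fin; exact: hd.
have [y10 [y1f y20]] := h5 p pm.
have [eU eD] := (Hdec p).1 (eq_ind_r _ nondecr_ind (Hind p pm)).
have f0 : fup P M k p xb xc <= 0 by exact: Hsol.1.
rewrite /esubdiff eU eD Hind // y20; split; split.
- by rewrite /ind_nonpos f0.
- move=> s; rewrite /ind_nonpos f0; case: ifP => s0; last by rewrite leey.
  rewrite add0e lee_fin mulrBr y1f subr0.
  by rewrite mulr_ge0_le0.
- by [].
- by move=> s; rewrite mul0r add0e.
Qed.
Section Sig.
Context {R : realType}.
Lemma tail_lim (a : nat -> R) k : cvgn (series a) ->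
  limn (fun N => \sum_(k <= j < N) a j) = limn (series a) - series a k.
Proof.
move=> ha; apply: cvg_lim => //.
have hg : (fun N => series a N - series a k) @ \oo --> limn (series a) - series a k.
  by apply: cvgB => //; exact: cvg_cst.
apply: cvg_trans hg; apply: near_eq_cvg; near=> N.
have kN : (k <= N)%N by near: N; exact: nbhs_infty_ge.
by rewrite /series /= (big_cat_nat (leq0n k) kN) /= addrAC subrr add0r.
Unshelve. all: end_near.
Qed.

Lemma series_nondecr (a : nat -> R) : (forall j, 0 <= a j) ->
  {homo series a : i j / (i <= j)%N >-> i <= j}.
Proof.
move=> a0 i j ij; rewrite /series /= (big_cat_nat (leq0n i) ij) /= lerDl.
by apply: sumr_ge0 => l _; exact: a0.
Qed.

Lemma tail_small (a : nat -> R) : cvgn (series a) -> (forall j, 0 <= a j) ->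
  (forall k, 0 <= limn (fun N => \sum_(k <= j < N) a j)) /\
  forall e, 0 < e -> exists K, forall k, (K <= k)%N -> limn (fun N => \sum_(k <= j < N) a j) < e.
Proof.
move=> ha a0; split => [k|e e0].
  rewrite tail_lim // subr_ge0; apply: nondecreasing_cvgn_le => //; exact: series_nondecr.
have := proj1 (cvgrPdist_lt _ _) ha e e0 => -[K _ HK].
exists K => k Kk; rewrite tail_lim //.
exact: le_lt_trans (ler_norm _) (HK k Kk).
Qed.
End Sig.
Lemma enorm0 {R : realType} {n : nat} : enorm (0 : 'rV[R]_n) = 0.
Proof. by rewrite /enorm big1 ?sqrtr0 // => i _; rewrite mxE expr0n. Qed.

Theorem proposition4p8 (R : realType) (n m : nat) (P : cp1 R n m) (M : padc R n m) :
  cp1_wf P ->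
  Assumption1 P -> Assumption2 P M -> Assumption3 P M -> Assumption4 P ->
  Assumption5 P -> method_wf P M -> Assumption6 P M ->
  generated P M ->
  (exists B : R, forall k, enorm (xs M k) <= B) ->
  (forall x, domF_all P x -> forall p, I2 P p -> dAinf P p x = [set 0]) ->
  forall (eta beta : R) (kbar : nat), 0 < eta -> 0 < beta ->
  exists k0 : nat, (kbar <= k0)%N /\
    \big[Num.max/0]_(p < m) sigma M k0 p + eps M k0 <= beta /\
    del M k0 / (lam M + ell M k0) <= beta /\
    del M k0 <= eta /\
    weakly_A_stationary P
      (eta%:E * maxe 1%E ((Num.sqrt (2 * m)%:R)%:E * Dconst P M))%E
      beta kbar (xx M k0 (ik M k0).+1).
Proof.
move=> Hwf A1 A2 A3 A4 A5 Hmw HA6 Hgen _ _ eta beta kbar eta0 beta0.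
have [Hlam [Heps0 [_ [Heps [Hdel0 [_ [Hdel [_ [Hdl [Hh Hg]]]]]]]]]] := Hmw.
have [Ha0 [_ [Hser _]]] := A2.
have Hell := A3.1.
have [m1m [Hpsi [Hind [Hdec Hcvx]]]] := Hwf.
have hsig : forall p : 'I_m, (forall k, 0 <= sigma M k p) /\
    forall e, 0 < e -> exists K, forall k, (K <= k)%N -> sigma M k p < e.
  move=> p; exact: (tail_small (fun j => ahat M j p) (Hser p) (fun j => Ha0 j p)).
have b2 : 0 < beta / 2 by rewrite divr_gt0.
have hK : forall p : 'I_m, exists K, forall k, (K <= k)%N -> sigma M k p < beta / 2.
  by move=> p; exact: (hsig p).2 _ b2.
have [Kf HKf] := choice hK.
have [Ke HKe] := Heps (beta / 2) b2.
have [Kd HKd] := Hdl beta beta0.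
have [Kt HKt] := Hdel eta eta0.
pose k0 := maxn kbar (maxn (\max_(p < m) Kf p) (maxn Ke (maxn Kd Kt))).
have l1 : (kbar <= k0)%N by rewrite /k0; lia.
have l2 : (\max_(p < m) Kf p <= k0)%N by rewrite /k0; lia.
have l3 : (Ke <= k0)%N by rewrite /k0; lia.
have l4 : (Kd <= k0)%N by rewrite /k0; lia.
have l5 : (Kt <= k0)%N by rewrite /k0; lia.
have hsk : forall p, sigma M k0 p < beta / 2.
  by move=> p; apply: HKf; exact: leq_trans (leq_bigmax p) l2.
have hek : eps M k0 < beta / 2.
  by have := HKe k0 l3; rewrite subr0; apply: le_lt_trans; exact: ler_norm.
have hdk : del M k0 / (lam M + ell M k0) < beta.
  by have := HKd k0 l4; rewrite subr0; apply: le_lt_trans; exact: ler_norm.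
have htk : del M k0 < eta.
  by have := HKt k0 l5; rewrite subr0; apply: le_lt_trans; exact: ler_norm.
have hmax : \big[Num.max/0]_(p < m) sigma M k0 p <= beta / 2.
  by apply: bigmax_le; [exact: ltW | move=> p _; exact: ltW].
exists k0; split => //.
split; first lra.
split; first exact: ltW.
split; first exact: ltW.
pose i := ik M k0; pose xc := xx M k0 i; pose xn := xx M k0 i.+1.
have [_ [_ [Hsubs [Hstop _]]]] := Hgen.
have Hsol : subsol P M k0 xc xn := Hsubs k0 i.
move: (Hstop k0).1 => -[st1 [st2 st3]].
rewrite -/i -/xc -/xn in st1 st2 st3.
have [y1 [y2 [v1 [v2 [hv1 [hv2 [hsum hsub]]]]]]] := kkt_final P M k0 xc xn Hwf Hmw HA6 Hsol.
have hnb : enorm (xn - xc) <= beta := le_trans st3 (ltW hdk).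
have hnb' : enorm (xc - xn) <= beta by rewrite -opprB enormN.
have hn0 : enorm (xn - xn) <= beta by rewrite subrr enorm0 ltW.
exists k0; split => //.
apply: ge_ereal_inf.
exists (enorm (0 - \sum_p (y1 p *: v1 p + y2 p *: v2 p)))%:E.
  exists (\sum_p (y1 p *: v1 p + y2 p *: v2 p)) => //.
  exists (fun p => y1 p *: v1 p + y2 p *: v2 p); split => // p.
  exists (y1 p), (y2 p), (v1 p), (v2 p); split.
    exists (fup P M k0 p xn xc); split; last exact: (hsub p).1.
    have := st1 p; have := Hh k0 p xc xn; have := (hsig p).1 k0; have := hsk p.
    move: hmax hek; rewrite /fup /fk => hmax hek h1 h2 h3 h4.
    rewrite ler_norml; apply/andP; split; lra.
  split.
    case: (pselect (I2 P p)) => hI.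
      exists (flo P M k0 p xn xc); split; last exact: (hsub p).2.
      have := st2 p hI; have := Hg k0 p xc xn.
      move: hek; rewrite /flo /fk => hek h1 h2.
      rewrite ler_norml; apply/andP; split; lra.
    have nd : nondecr (phi P p) by apply/not_notP.
    have [_ eD] := (Hdec p).1 nd.
    exists (fk P k0 p xn); split; first by rewrite subrr normr0 ltW.
    have := (hsub p).2; rewrite eD /esubdiff => -[_ hz]; split => // s.
    have := hz (s - fk P k0 p xn + flo P M k0 p xn xc).
    by have -> : s - fk P k0 p xn + flo P M k0 p xn xc - flo P M k0 p xn xc = s - fk P k0 p xn
      by ring.
  split.
    have [v hv <-] := hv1 p.
    exists v; first by exists xn; split.
    exists (asel M k0 p xc) => //.
    by exists xc; split => //; exact: Hh.
  split => //.
  have [w hw <-] := hv2 p.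
  exists (bsel M k0 p xc); first by exists xc; split => //; exact: Hg.
  by exists w => //; exists xn; split.
have hw : \sum_p (y1 p *: v1 p + y2 p *: v2 p) = - (lam M *: (xn - xc)).
  by apply/eqP; rewrite -addr_eq0 hsum.
rewrite hw sub0r opprK enormZ ger0_norm ?(ltW Hlam) //.
apply: (@le_trans _ _ eta%:E).
  rewrite lee_fin; apply: (le_trans _ (ltW htk)).
  apply: (le_trans (ler_wpM2l (ltW Hlam) st3)).
  have hl : 0 < lam M + ell M k0 by rewrite addr_gt0 // Hell.
  rewrite mulrCA ger_pMr ?Hdel0 //.
  by rewrite ler_pdivrMr // mul1r lerDl ltW // Hell.
rewrite -[X in (X <= _)%E]mule1; apply: lee_wpmul2l; first by rewrite lee_fin ltW.
by rewrite le_max lexx.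
Qed.
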